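(* For all integers $n\ge 1$ and $\ell\ge 2$, \[\binom{n}{2}-(n-1)\le \max(n,\ell)\le \binom{n}{2}-\left\lfloor\frac{n}{2}\right\rfloor.\]
   Context: All graphs are finite and simple. Vertex labels lie in $\mathbb{Z}_\ell$. In the neighborhood Lights Out game on a graph $G$, one starts with a labeling $V(G)\to\mathbb{Z}_\ell$; toggling a vertex $v$ adds $1$ (mod $\ell$) to the label of every vertex in the closed neighborhood $N[v]$; the game is won when every label is $0$. $G$ is $N$-AW (always winnable) if the game can be won from every initial labeling. $\max(n,\ell)$ is the maximum number of edges of an $N$-AW graph on $n$ vertices. *)

(* Defs.v *)
From mathcomp Require Import all_boot all_algebra.
Set Implicit Arguments. Unset Strict Implicit.
 Unset Printing Implicit Defensive.
Import GRing.Theory.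
Local Open Scope ring_scope.

Definition graph (n : nat) := {ffun 'I_n * 'I_n -> bool}.

Definition adj n (G : graph n) (u v : 'I_n) : bool := G (u, v).

Definition simpleb n (G : graph n) : bool :=
  [forall u, ~~ adj G u u] && [forall u, forall v, adj G u v == adj G v u].

Definition in_cnbhd n (G : graph n) (v u : 'I_n) : bool := (u == v) || adj G v u.

Definition nedges n (G : graph n) : nat :=
  #|[set p : 'I_n * 'I_n | adj G p.1 p.2 && (p.1 < p.2)%N]|.

(* A strategy is recorded by the number
   t u (mod ell) of times each vertex u is toggled (order is irrelevant);
   toggling u adds 1 to every label in N[u]. *)
Definition N_winnable n (ell : nat) (G : graph n) (f : {ffun 'I_n -> 'Z_ell}) : bool :=
  [exists t : {ffun 'I_n -> 'Z_ell},
     [forall v, f v + \sum_(u | in_cnbhd G u v) t u == 0]].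

Definition N_AW n (ell : nat) (G : graph n) : bool :=
  [forall f : {ffun 'I_n -> 'Z_ell}, @N_winnable n ell G f].

Arguments N_winnable : clear implicits.
Arguments N_AW : clear implicits.
Definition maxAW (n ell : nat) : nat :=
  \max_(G : graph n | simpleb G && @N_AW n ell G) nedges G.

(* Main.v *)
Require Import Defs.
From mathcomp Require Import all_boot all_algebra zify.
Set Implicit Arguments. Unset Strict Implicit. Unset Printing Implicit Defensive.
Import GRing.Theory.

Lemma sum_lt_nat n : \sum_(0 <= i < n) \sum_(0 <= j < n) ((i < j) : nat) = 'C(n, 2).
Proof.
elim: n => [|n IH]; first by rewrite big_geq.
rewrite big_nat_recr //= [X in _ + X]big1_seq; last first.
  move=> j; rewrite mem_index_iota => Hj; case: ltnP => //; lia.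
rewrite addn0.
have -> : \sum_(0 <= i < n) \sum_(0 <= j < n.+1) ((i < j) : nat)
        = \sum_(0 <= i < n) (\sum_(0 <= j < n) ((i < j) : nat) + 1).
  apply: eq_big_seq => i; rewrite mem_index_iota => Hi; have {}Hi : (i < n)%N by lia.
  by rewrite big_nat_recr //= Hi.
rewrite big_split /= IH sum_nat_const_nat muln1 subn0 binS bin1 addnC.
by [].
Qed.

Lemma card_pairs n : #|[set p : 'I_n * 'I_n | (p.1 < p.2)%N]| = 'C(n, 2).
Proof.
rewrite -sum1_card -sum_lt_nat big_mkcond /= big_mkord.
under [RHS]eq_bigr do rewrite big_mkord.
rewrite pair_big /=; apply: eq_bigr => p _.
by rewrite inE; case: (p.1 < p.2)%N.
Qed.
Definition nonE n (G : graph n) :=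
  [set p : 'I_n * 'I_n | ~~ adj G p.1 p.2 && (p.1 < p.2)%N].

Lemma symG n (G : graph n) : simpleb G -> forall u v, adj G u v = adj G v u.
Proof. by move=> /andP[_ /forallP Hs] u v; apply/eqP; exact: (forallP (Hs u) v). Qed.

Lemma upper n ell (G : graph n) : simpleb G -> N_AW n ell G -> (n./2 <= #|nonE G|)%N.
Proof.
move=> Hsim Haw; have Hs := symG Hsim.
pose U := [set u : 'I_n | [forall v, (v != u) ==> adj G u v]].
have HU : forall u1 u2, u1 \in U -> u2 \in U -> u1 = u2.
  move=> u1 u2; rewrite !inE => /forallP H1 /forallP H2.
  apply/eqP/negP => /negP ne.
  pose f : {ffun 'I_n -> 'Z_ell} := [ffun v => if v == u1 then 1%R else 0%R].
  move: Haw => /forallP /(_ f) /existsP [t /forallP Ht].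
  have Hall : forall v, v \in [set u1; u2] -> forall u, in_cnbhd G u v.
    move=> v; rewrite !inE => Hv u; rewrite /in_cnbhd.
    case: eqP => //= /eqP nvu; rewrite Hs.
    have nuv : u != v by rewrite eq_sym.
    by case/orP: Hv => /eqP Ev; subst v; [move: (H1 u) | move: (H2 u)]; rewrite nuv.
  have E1 := Ht u1; have E2 := Ht u2.
  rewrite (eq_bigl xpredT) in E1; last by move=> u; apply: Hall; rewrite !inE eqxx.
  rewrite (eq_bigl xpredT) in E2; last by move=> u; apply: Hall; rewrite !inE eqxx orbT.
  move: E1 E2; rewrite !ffunE eqxx (eq_sym u2) (negbTE ne) add0r => /eqP E1 /eqP E2.
  by move: E1; rewrite E2 addr0 => /eqP; rewrite oner_eq0.
pose S := [set p.1 | p in nonE G] :|: [set p.2 | p in nonE G].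
have HS : ~: U \subset S.
  apply/subsetP => u; rewrite !inE negb_forall => /existsP [v]; rewrite negb_imply => /andP [nvu nadj].
  case: (ltngtP u v) => [luv|lvu|euv].
  - by apply/orP; left; apply/imsetP; exists (u,v) => //; rewrite inE /= nadj luv.
  - by apply/orP; right; apply/imsetP; exists (v,u) => //; rewrite inE /= -Hs nadj lvu.
  - by move: nvu; rewrite (val_inj euv) eqxx.
have HU1 : (#|U| <= 1)%N.
  case: (set_0Vmem U) => [->|[u0 Hu0]]; first by rewrite cards0.
  rewrite -(cards1 u0); apply: subset_leq_card; apply/subsetP => x Hx; rewrite inE; apply/eqP; exact: HU.
have Hn := cardsC U; rewrite card_ord in Hn.
have H1 := subset_leq_card HS.
have H2 : (#|S| <= #|nonE G| + #|nonE G|)%N.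
  rewrite cardsU; apply: leq_trans (leq_subr _ _) _; apply: leq_add; exact: leq_imset_card.
rewrite leq_half_double -mul2n. lia.
Qed.
Lemma nedges_nonE n (G : graph n) : (nedges G + #|nonE G| = 'C(n, 2))%N.
Proof.
rewrite -card_pairs -(cardsID [set p : 'I_n * 'I_n | adj G p.1 p.2] [set p : 'I_n * 'I_n | (p.1 < p.2)%N]).
rewrite /nedges /nonE; apply: f_equal2; apply: eq_card => p; rewrite !inE //; exact: andbC.
Qed.

Definition hrel (n u v : nat) : bool :=
  ((v %% 2 == 0) && (2 <= v) && (u == v.-1)) || ((n %% 2 == 0) && (u == 0) && (v %% 2 == 1)).
Definition hE n u v := hrel n u v || hrel n v u.
Definition G0 n : graph n := [ffun p : 'I_n * 'I_n => (p.1 != p.2) && ~~ hE n p.1 p.2].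

Lemma G0_simple n : simpleb (G0 n).
Proof.
apply/andP; split; apply/forallP => u; rewrite /adj ?ffunE /=.
  by rewrite eqxx.
apply/forallP => v; rewrite !ffunE /=.
have -> : hE n u v = hE n v u by rewrite /hE orbC.
by rewrite (eq_sym v u).
Qed.

Lemma G0_nonE n : (0 < n)%N -> (#|nonE (G0 n)| <= n - 1)%N.
Proof.
move=> hn.
have Hin : {in nonE (G0 n) &, injective (fun p : 'I_n * 'I_n => p.2)}.
  move=> [a i] [b j]; rewrite !inE /adj !ffunE /= => /andP [H1 L1] /andP [H2 L2] Eij.
  subst j; move: H1 H2; rewrite -!val_eqE /= => H1 H2.
  have Eab : (a : nat) = b by move: H1 H2 L1 L2; rewrite /hE /hrel; lia.
  by rewrite (val_inj Eab).
rewrite -(card_in_imset Hin).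
have Hp : [set p.2 | p in nonE (G0 n)] \proper [set: 'I_n].
  rewrite properT; apply/negP => /eqP E.
  have : (Ordinal hn) \in [set p.2 | p in nonE (G0 n)] by rewrite E inE.
  by case/imsetP => [[a i]]; rewrite inE /= => /andP [_ L] Ei; rewrite -Ei in L.
have := proper_card Hp; rewrite cardsT card_ord => H; by rewrite subn1 -ltnS prednK.
Qed.
Lemma cnG0 n (u v : 'I_n) : in_cnbhd (G0 n) u v = ~~ hE n u v.
Proof.
rewrite /in_cnbhd /adj ffunE /=; case: eqP => [->|/eqP ne] /=.
  by symmetry; rewrite /hE /hrel; lia.
by rewrite eq_sym ne.
Qed.

Local Open Scope ring_scope.

Section Sums.
Variables (n ell : nat) (t : {ffun 'I_n -> 'Z_ell}) (P : pred 'I_n).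

Lemma sum0 : (forall u, P u = false) -> \sum_(u | ~~ P u) t u = \sum_u t u.
Proof. by move=> H; apply: eq_bigl => u; rewrite H. Qed.

Lemma sum1 x : (forall u, P u = (u == x)) -> \sum_(u | ~~ P u) t u = \sum_u t u - t x.
Proof.
move=> H; rewrite [in RHS](bigD1 x) //= addrC addrK; apply: eq_bigl => u; by rewrite H.
Qed.

Lemma sum2 x y : x != y -> (forall u, P u = (u == x) || (u == y)) ->
  \sum_(u | ~~ P u) t u = \sum_u t u - t x - t y.
Proof.
move=> nxy H; rewrite [in RHS](bigD1 x) //= [in RHS](bigD1 y) /=; last by rewrite eq_sym.
rewrite (addrC (t x)) addrK addrC addrK.
by apply: eq_bigl => u; rewrite H negb_or andbC.
Qed.

Lemma sum_only x : (forall u, u != x -> t u = 0) -> \sum_u t u = t x.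
Proof.
by move=> H; rewrite (bigD1 x) //= big1 ?addr0 // => u /H.
Qed.
End Sums.

Ltac hl := let u := fresh "u" in move=> u; have := ltn_ord u; rewrite -?val_eqE /= /hE /hrel; lia.

Lemma G0_ker n ell (hn : (0 < n)%N) (t : {ffun 'I_n -> 'Z_ell}) :
  (forall v, \sum_(u | in_cnbhd (G0 n) u v) t u = 0) -> forall u, t u = 0.
Proof.
move=> Ht.
have E : forall v : 'I_n, \sum_(u : 'I_n | ~~ hE n u v) t u = 0.
  by move=> v; rewrite -[RHS](Ht v); apply: eq_bigl => u; rewrite cnG0.
pose c := Ordinal hn.
have negP0 : forall a : 'Z_ell, - a = 0 -> a = 0.
  by move=> a /eqP; rewrite oppr_eq0 => /eqP.
case: (boolP (n %% 2 == 0)%N) => hpar.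
- have hw : (n.-1 < n)%N by lia.
  pose w := Ordinal hw.
  have Ew : \sum_u t u - t c = 0.
    by rewrite -[RHS](E w) (@sum1 _ _ _ _ c) //; hl.
  have A : forall b : 'I_n, (b %% 2 == 0)%N -> (2 <= b)%N -> t b = 0.
    move=> b be b2; have := ltn_ord b => bn; have ha : (b.-1 < n)%N by lia.
    have Ea := E (Ordinal ha).
    rewrite (@sum2 _ _ _ _ c b) in Ea; last 2 first.
    + by rewrite -val_eqE /=; lia.
    + by hl.
    by rewrite Ew sub0r in Ea; apply: negP0.
  have B : t c = 0.
    have Ec := E c.
    rewrite (bigD1 c) /= in Ec; last by rewrite /hE /hrel; lia.
    rewrite big1 ?addr0 // in Ec => u /andP [hu uc].
    by apply: A; move: hu uc; rewrite -val_eqE /= /hE /hrel; lia.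
  have C : \sum_u t u = 0 by rewrite B subr0 in Ew.
  have D : forall a : 'I_n, (a %% 2 == 1)%N -> (a < n.-1)%N -> t a = 0.
    move=> a ao al; have hb : (a.+1 < n)%N by lia.
    have Eb := E (Ordinal hb).
    rewrite (@sum1 _ _ _ _ a) in Eb; last by hl.
    by rewrite C sub0r in Eb; apply: negP0.
  have Hne : forall u, u != w -> t u = 0.
    move=> u; have := ltn_ord u => un; rewrite -val_eqE /= => uw.
    case: (boolP (u == 0 :> nat)) => u0.
      by have -> : u = c by apply: val_inj => /=; lia.
    case: (boolP (u %% 2 == 0)%N) => ue.
      by apply: A => //; lia.
    by apply: D; lia.
  move=> u; case: (eqVneq u w) => [->|]; last exact: Hne.
  by rewrite -(sum_only Hne).
- have C : \sum_u t u = 0 by rewrite -[RHS](E c) sum0 //; hl.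
  have Hne : forall u, u != c -> t u = 0.
    move=> u; have := ltn_ord u => un; rewrite -val_eqE /= => uc.
    case: (boolP (u %% 2 == 0)%N) => ue.
      have ha : (u.-1 < n)%N by lia.
      have Ea := E (Ordinal ha).
      rewrite (@sum1 _ _ _ _ u) in Ea; last by hl.
      by rewrite C sub0r in Ea; apply: negP0.
    have hb : (u.+1 < n)%N by lia.
    have Eb := E (Ordinal hb).
    rewrite (@sum1 _ _ _ _ u) in Eb; last by hl.
    by rewrite C sub0r in Eb; apply: negP0.
  move=> u; case: (eqVneq u c) => [->|]; last exact: Hne.
  by rewrite -(sum_only Hne).
Qed.

Lemma G0_AW n ell (hn : (0 < n)%N) : N_AW n ell (G0 n).
Proof.
pose M (t : {ffun 'I_n -> 'Z_ell}) : {ffun 'I_n -> 'Z_ell} :=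
  [ffun v => \sum_(u | in_cnbhd (G0 n) u v) t u].
have Minj : injective M.
  move=> t1 t2 E; apply/ffunP => u; apply/eqP; rewrite -subr_eq0; apply/eqP.
  pose d : {ffun 'I_n -> 'Z_ell} := [ffun u => t1 u - t2 u].
  have := @G0_ker n ell hn d _ u; rewrite ffunE; apply => v.
  rewrite (eq_bigr (fun u => t1 u - t2 u)); last by move=> ? _; rewrite ffunE.
  rewrite sumrB.
  by move/ffunP: E => /(_ v); rewrite !ffunE => ->; rewrite subrr.
have [g Mg gM] := injF_bij Minj.
apply/forallP => f; apply/existsP; exists (g [ffun v => - f v]); apply/forallP => v.
move/ffunP: (gM [ffun v => - f v]) => /(_ v); rewrite !ffunE => ->.
by rewrite subrr.
Qed.

Local Close Scope ring_scope.

Theorem proposition4p1 (n ell : nat) (hn : (1 <= n)%N) (hl : (2 <= ell)%N) :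
  ('C(n, 2) - (n - 1) <= maxAW n ell <= 'C(n, 2) - n./2)%N.
Proof.
apply/andP; split.
- have H1 := G0_nonE hn; have H2 := nedges_nonE (G0 n).
  have Hle : (nedges (G0 n) <= maxAW n ell)%N.
    by rewrite /maxAW; apply: (leq_bigmax_cond (G0 n)); rewrite G0_simple (G0_AW ell hn).
  lia.
- rewrite /maxAW; apply/bigmax_leqP => G /andP [Hs Ha].
  have := upper Hs Ha; have := nedges_nonE G; lia.
Qed.
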